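(* Let $X, Y, Z$ be uncertain variables on a common set $\Omega$ with finite ranges. Then: (a) $\mathcal{L}_\star(X\rightarrow Y)\geq 0$; (b) $\mathcal{L}_\star(X\rightarrow Y)=0$ if and only if $X$ and $Y$ are unrelated; (c) $\mathcal{L}_\star(X\rightarrow Y)\leq H_0(X)$, with equality if $Y=X$; (d) if $X-Y-Z$ is a Markov chain, then $\mathcal{L}_\star(X\rightarrow Z)\leq \mathcal{L}_\star(X\rightarrow Y)$.
   Context: Let $\Omega$ be a set. An uncertain variable (uv) is a map $X:\Omega\to\mathbb{X}$ into some set; all uvs considered have finite ranges. The range of $X$ is $[\![X]\!]:=\{X(\omega):\omega\in\Omega\}$; the joint range of $X,Y$ is $[\![X,Y]\!]:=\{(X(\omega),Y(\omega)):\omega\in\Omega\}$; the conditional range is $[\![X\mid Y(\omega)=y]\!]:=\{X(\omega):\omega\in\Omega,\ Y(\omega)=y\}$, and similarly $[\![X\mid Z(\omega)=z,Y(\omega)=y]\!]:=\{X(\omega):\omega\in\Omega,\ Z(\omega)=z,\ Y(\omega)=y\}$. Uvs $X$ and $Y$ are unrelated if $[\![X\mid Y(\omega)=y]\!]=[\![X]\!]$ for all $y\in[\![Y]\!]$ and $[\![Y\mid X(\omega)=x]\!]=[\![Y]\!]$ for all $x\in[\![X]\!]$. Uvs $X,Y,Z$ form a Markov chain $X-Y-Z$ if $[\![X\mid Z(\omega)=z,Y(\omega)=y]\!]=[\![X\mid Y(\omega)=y]\!]$ for all $(z,y)\in[\![Z,Y]\!]$. The non-stochastic entropy is $H_0(X):=\log_2|[\![X]\!]|$.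 The non-stochastic brute-force guessing leakage from a uv $U$ to a uv $Y$ is $$\mathcal{L}(U\rightarrow Y):=\log_2\left(\frac{|[\![U]\!]|}{\min_{y\in[\![Y]\!]}|[\![U\mid Y(\omega)=y]\!]|}\right).$$ The maximal non-stochastic brute-force leakage from $X$ to $Y$ is $$\mathcal{L}_\star(X\rightarrow Y):=\sup_{g}\ \mathcal{L}(g\circ X\rightarrow Y),$$ where the supremum ranges over all finite sets $\mathcal{U}$ and all functions $g:[\![X]\!]\to\mathcal{U}$. *)

(* Defs.v *)
From HB Require Import structures.
From mathcomp Require Import all_boot all_order all_algebra.
From mathcomp Require Import boolp classical_sets reals exp.
Set Implicit Arguments. Unset Strict Implicit. Unset Printing Implicit Defensive.
Import Order.TTheory GRing.Theory Num.Theory.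

Section UV.
Variable Omega : Type.

Definition urange (T : finType) (X : Omega -> T) : {set T} :=
  [set x | `[< exists w, X w = x >]].

Definition ujrange (T1 T2 : finType) (X : Omega -> T1) (Y : Omega -> T2)
  : {set T1 * T2} :=
  [set p | `[< exists w, X w = p.1 /\ Y w = p.2 >]].

Definition ucrange (T1 T2 : finType) (X : Omega -> T1) (Y : Omega -> T2) (y : T2)
  : {set T1} :=
  [set x | `[< exists w, Y w = y /\ X w = x >]].

Definition ucrange2 (T1 T2 T3 : finType) (X : Omega -> T1) (Z : Omega -> T3)
  (Y : Omega -> T2) (z : T3) (y : T2) : {set T1} :=
  [set x | `[< exists w, Z w = z /\ Y w = y /\ X w = x >]].

Definition unrelated (T1 T2 : finType) (X : Omega -> T1) (Y : Omega -> T2) : Prop :=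
  (forall y, y \in urange Y -> ucrange X Y y = urange X) /\
  (forall x, x \in urange X -> ucrange Y X x = urange Y).

Definition markov (T1 T2 T3 : finType) (X : Omega -> T1) (Y : Omega -> T2)
  (Z : Omega -> T3) : Prop :=
  forall z y, (z, y) \in ujrange Z Y -> ucrange2 X Z Y z y = ucrange X Y y.

Variable R : realType.

Definition log2 (x : R) : R := ln x / ln 2.

Definition H0 (T : finType) (X : Omega -> T) : R := log2 (#|urange X|%:R).

(* min_{y in [[Y]]} |[[U | Y = y]]|; the neutral element #|TU| is an upper
   bound of every such cardinality, so this is the true minimum whenever
   [[Y]] is nonempty. *)
Definition min_crange (TU TY : finType) (U : Omega -> TU) (Y : Omega -> TY) : nat :=
  \big[minn/#|TU|]_(y in urange Y) #|ucrange U Y y|.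

Definition bf_leak (TU TY : finType) (U : Omega -> TU) (Y : Omega -> TY) : R :=
  log2 (#|urange U|%:R / (min_crange U Y)%:R).

Definition max_leak (TX TY : finType) (X : Omega -> TX) (Y : Omega -> TY) : R :=
  sup [set r : R | exists (TU : finType) (g : TX -> TU), r = bf_leak (g \o X) Y].

End UV.

(* Main.v *)
Require Import Defs.
From HB Require Import structures.
From mathcomp Require Import all_boot all_order all_algebra.
From mathcomp Require Import boolp classical_sets reals exp.
Import Order.TTheory GRing.Theory Num.Theory.
Local Open Scope ring_scope.

Section Aux.
Variable Omega : Type.

Lemma in_urange (T : finType) (X : Omega -> T) x :
  (x \in urange X) <-> exists w, X w = x.
Proof. by rewrite inE; split => [/asboolP|?]; [|apply/asboolP]. Qed.

Lemma in_ucrange (T1 T2 : finType) (X : Omega -> T1) (Y : Omega -> T2) y x :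
  (x \in ucrange X Y y) <-> exists w, Y w = y /\ X w = x.
Proof. by rewrite inE; split => [/asboolP|?]; [|apply/asboolP]. Qed.

Lemma urange_comp (T U : finType) (X : Omega -> T) (g : T -> U) :
  urange (g \o X) = g @: urange X.
Proof.
apply/setP => u; apply/idP/idP.
  by move/in_urange => [w <-]; apply/imsetP; exists (X w) => //; apply/in_urange; exists w.
by move/imsetP => [x /in_urange [w <-] ->]; apply/in_urange; exists w.
Qed.

Lemma ucrange_comp (T U T2 : finType) (X : Omega -> T) (Y : Omega -> T2) (g : T -> U) y :
  ucrange (g \o X) Y y = g @: ucrange X Y y.
Proof.
apply/setP => u; apply/idP/idP.
  move/in_ucrange => [w [Hy <-]]; apply/imsetP; exists (X w) => //.
  by apply/in_ucrange; exists w.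
by move/imsetP => [x /in_ucrange [w [Hy <-]] ->]; apply/in_ucrange; exists w.
Qed.

Lemma ucrange_sub (T1 T2 : finType) (X : Omega -> T1) (Y : Omega -> T2) y :
  ucrange X Y y \subset urange X.
Proof.
by apply/fintype.subsetP => x /in_ucrange [w [_ <-]]; apply/in_urange; exists w.
Qed.

Lemma min_le (TU TY : finType) (U : Omega -> TU) (Y : Omega -> TY) y :
  y \in urange Y -> (min_crange U Y <= #|ucrange U Y y|)%N.
Proof.
move=> Hy; rewrite /min_crange.
have : y \in index_enum TY by rewrite mem_index_enum.
elim: (index_enum TY) => [//|a r IH]; rewrite in_cons big_cons.
case/orP => [/eqP <-|/IH H]; first by rewrite Hy geq_minl.
by case: ifP => // _; rewrite geq_min H orbT.
Qed.

Lemma min_ge (TU TY : finType) (U : Omega -> TU) (Y : Omega -> TY) n :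
  (forall y, y \in urange Y -> n <= #|ucrange U Y y|)%N -> (n <= #|TU|)%N ->
  (n <= min_crange U Y)%N.
Proof.
move=> H Hn; rewrite /min_crange; apply: (big_ind (fun m => n <= m)%N) => //.
  by move=> a b Ha Hb; rewrite leq_min Ha Hb.
Qed.

Lemma min_gt0 (TU TY : finType) (U : Omega -> TU) (Y : Omega -> TY) :
  inhabited Omega -> (0 < min_crange U Y)%N.
Proof.
move=> [w0]; apply: min_ge; last by apply/card_gt0P; exists (U w0).
move=> y /in_urange [w <-]; apply/card_gt0P; exists (U w).
by apply/in_ucrange; exists w.
Qed.

Lemma min_le_range (TU TY : finType) (U : Omega -> TU) (Y : Omega -> TY) :
  inhabited Omega -> (min_crange U Y <= #|urange U|)%N.
Proof.
move=> [w0]; have H1 := @min_le _ _ U Y (Y w0); apply: leq_trans (H1 _) _.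
  by apply/in_urange; exists w0.
exact/subset_leq_card/ucrange_sub.
Qed.

End Aux.

Section Real.
Variable R : realType.

Lemma ln2_gt0 : 0 < ln (2 : R).
Proof. by apply: ln_gt0; rewrite ltr1n. Qed.

Lemma log2_le (x y : R) : 0 < x -> x <= y -> log2 x <= log2 y.
Proof.
move=> x0 xy; rewrite /log2; apply: ler_wpM2r.
  by rewrite invr_ge0 ltW // ln2_gt0.
by rewrite ler_ln // posrE // (lt_le_trans x0 xy).
Qed.

Lemma log2_ge0 (x : R) : 1 <= x -> 0 <= log2 x.
Proof.
by move=> x1; rewrite /log2 mulr_ge0 ?ln_ge0 // invr_ge0 ltW // ln2_gt0.
Qed.

Lemma bf_bounds (Omega : Type) (TU TY : finType) (U : Omega -> TU) (Y : Omega -> TY) :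
  inhabited Omega ->
  0 <= bf_leak R U Y /\ bf_leak R U Y <= log2 (#|urange U|%:R).
Proof.
move=> inh; have b0 := @min_gt0 _ _ _ U Y inh; have ba := @min_le_range _ _ _ U Y inh.
have a0 : (0 < #|urange U|)%N by apply: leq_trans ba.
have b0' : 0 < (min_crange U Y)%:R :> R by rewrite ltr0n.
split.
  by apply: log2_ge0; rewrite ler_pdivlMr // mul1r ler_nat.
apply: log2_le; first by rewrite divr_gt0 // ltr0n.
by rewrite ler_pdivrMr // ler_peMr // ?ler0n // ler1n.
Qed.

End Real.

Section Main.
Variables (R : realType) (Omega : Type) (TX TY : finType).
Variables (X : Omega -> TX) (Y : Omega -> TY).
Hypothesis inh : inhabited Omega.

Let S := [set r : R | exists (TU : finType) (g : TX -> TU), r = bf_leak R (g \o X) Y]%classic.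

Lemma bf_le_H0 (TU : finType) (g : TX -> TU) : bf_leak R (g \o X) Y <= H0 R X.
Proof.
have [_ h] := @bf_bounds R _ _ _ (g \o X) Y inh; apply: le_trans h _.
case: inh => w0.
apply: log2_le; first by rewrite ltr0n; apply/card_gt0P; exists (g (X w0)); apply/in_urange; exists w0.
by rewrite ler_nat urange_comp leq_imset_card.
Qed.

Lemma S_ub : ubound S (H0 R X).
Proof. by move=> r [TU [g ->]]; apply: bf_le_H0. Qed.

Lemma S_n0 : (S !=set0)%classic.
Proof. by exists (bf_leak R X Y); exists TX, id. Qed.

Lemma ml_le_H0 : max_leak R X Y <= H0 R X.
Proof. exact: (ge_sup S_n0 S_ub). Qed.

Lemma bf_le_ml (TU : finType) (g : TX -> TU) : bf_leak R (g \o X) Y <= max_leak R X Y.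
Proof. by apply: (ub_le_sup (ex_intro _ _ S_ub)); exists TU, g. Qed.

Lemma ml_ge0 : 0 <= max_leak R X Y.
Proof. exact: le_trans (proj1 (@bf_bounds R _ _ _ X Y inh)) (bf_le_ml TX id). Qed.

Lemma ml_le_of (c : R) :
  (forall (TU : finType) (g : TX -> TU), bf_leak R (g \o X) Y <= c) -> max_leak R X Y <= c.
Proof. by move=> H; apply: (ge_sup S_n0) => r [TU [g ->]]; apply: H. Qed.

End Main.

Lemma in_ucrange2 (Omega : Type) (T1 T2 T3 : finType) (X : Omega -> T1) (Z : Omega -> T3)
  (Y : Omega -> T2) z y x :
  (x \in ucrange2 X Z Y z y) <-> exists w, Z w = z /\ Y w = y /\ X w = x.
Proof. by rewrite inE; split => [/asboolP|?]; [|apply/asboolP]. Qed.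

Lemma in_ujrange (Omega : Type) (T1 T2 : finType) (X : Omega -> T1) (Y : Omega -> T2) p :
  (p \in ujrange X Y) <-> exists w, X w = p.1 /\ Y w = p.2.
Proof. by rewrite inE; split => [/asboolP|?]; [|apply/asboolP]. Qed.

Theorem proposition3 (R : realType) (Omega : Type) (TX TY TZ : finType)
  (X : Omega -> TX) (Y : Omega -> TY) (Z : Omega -> TZ) :
  inhabited Omega ->
  [/\ 0 <= max_leak R X Y,
      max_leak R X Y = 0 <-> unrelated X Y,
      max_leak R X Y <= H0 R X /\ max_leak R X X = H0 R X
    & markov X Y Z -> max_leak R X Z <= max_leak R X Y].
Proof.
move=> inh; have [w0] := inh.
have ln2n0 : ln (2 : R) != 0 by rewrite gt_eqF // ln2_gt0.
split.
- exact: ml_ge0.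
- split.
  + move=> H.
    have h1 := @bf_le_ml R _ _ _ X Y inh TX id; rewrite H in h1.
    have h0 := proj1 (@bf_bounds R _ _ _ X Y inh).
    have E0 : bf_leak R X Y = 0 by apply/le_anti; rewrite h0 andbT.
    have b0 := @min_gt0 _ _ _ X Y inh.
    have ba := @min_le_range _ _ _ X Y inh.
    have b0' : (min_crange X Y)%:R != 0 :> R by rewrite pnatr_eq0 -lt0n.
    have Eab : #|urange X| = min_crange X Y.
      move: E0; rewrite /bf_leak /log2 => /eqP; rewrite mulf_eq0 invr_eq0 (negbTE ln2n0) orbF.
      rewrite ln_eq0; last by rewrite divr_gt0 // ltr0n //; apply: leq_trans ba.
      move/eqP => E; apply/eqP; rewrite -(eqr_nat R).
      by rewrite -[X in X == _](divfK b0') E mul1r.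
    have HY : forall y, y \in urange Y -> ucrange X Y y = urange X.
      move=> y Hy; apply/eqP; rewrite eqEcard ucrange_sub /= Eab.
      exact: min_le.
    split => // x Hx; apply/setP => y; apply/idP/idP; first by apply/fintype.subsetP/ucrange_sub.
    move=> Hy; move: Hx; rewrite -(HY y Hy) => /in_ucrange [w [Hw1 Hw2]].
    by apply/in_ucrange; exists w.
  + move=> [HY HX]; apply/le_anti; rewrite ml_ge0 // andbT.
    apply: ml_le_of => // TU g.
    have Em : min_crange (g \o X) Y = #|urange (g \o X)|.
      apply/eqP; rewrite eqn_leq min_le_range //= min_ge //; last exact: max_card.
      by move=> y Hy; rewrite ucrange_comp urange_comp HY.
    rewrite /bf_leak Em divff ?pnatr_eq0 -?lt0n; last first.
      by apply/card_gt0P; exists (g (X w0)); apply/in_urange; exists w0.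
    by rewrite /log2 ln1 mul0r.
- split; first exact: ml_le_H0.
  apply/le_anti; rewrite ml_le_H0 //=.
  have := @bf_le_ml R _ _ _ X X inh TX id; apply: le_trans.
  change (H0 R X <= bf_leak R X X); rewrite /bf_leak.
  have -> : min_crange X X = 1%N.
    apply/eqP; rewrite eqn_leq min_gt0 // andbT.
    have H1 := @min_le _ _ _ X X (X w0); apply: leq_trans (H1 _) _.
      by apply/in_urange; exists w0.
    rewrite -(cards1 (X w0)); apply/subset_leq_card/fintype.subsetP => x /in_ucrange [w [-> <-]].
    by rewrite inE.
  by rewrite /bf_leak divr1.
- move=> HM; apply: ml_le_of => // TU g.
  apply: le_trans (@bf_le_ml R _ _ _ X Y inh TU g).
  set U := g \o X.
  have bY := @min_gt0 _ _ _ U Y inh.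
  have bZ := @min_gt0 _ _ _ U Z inh.
  have YZ : (min_crange U Y <= min_crange U Z)%N.
    apply: min_ge; last first.
      apply: leq_trans (@min_le _ _ _ U Y (Y w0) _) (max_card _).
      by apply/in_urange; exists w0.
    move=> z /in_urange [w <-].
    apply: leq_trans (@min_le _ _ _ U Y (Y w) _) _; first by apply/in_urange; exists w.
    apply/subset_leq_card; rewrite /U !ucrange_comp; apply/imsetS/fintype.subsetP => x Hx.
    have Hj : (Z w, Y w) \in ujrange Z Y by apply/in_ujrange; exists w.
    move: Hx; rewrite -(HM _ _ Hj) => /in_ucrange2 [w' [h1 [h2 h3]]].
    by apply/in_ucrange; exists w'.
  rewrite /bf_leak; apply: log2_le.
    rewrite divr_gt0 // ltr0n //; apply: leq_trans (@min_le_range _ _ _ U Z inh).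
  by [].
  apply: ler_wpM2l; first by rewrite ler0n.
  by rewrite lef_pV2 ?posrE ?ltr0n // ler_nat.
Qed.
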